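(* For every integer $r\ge 0$, let $K_r$ be the closure of the 3-braid $\sigma_1^{-r}\sigma_2\sigma_1^{3}\sigma_2$. Then $K_r$ is a quasi-alternating link, and $|\det K_r|=r+6$.
   Context: $\sigma_1,\sigma_2$ are the standard Artin generators of the 3-strand braid group. For $r\ge 5$, the link $K_r$ is the pretzel link $P(-r,3,-2)$; for $r=5$ it is the mirror of $10_{125}$. A link $L$ is quasi-alternating if it lies in the smallest set $\mathcal Q$ of links with the following two properties. First, the unknot is in $\mathcal Q$. Second, suppose $L$ has a diagram with a crossing whose two resolutions $L_0,L_1$ satisfy $L_0,L_1\in\mathcal Q$, $\det L_0,\det L_1\neq0$, and $\det L=\det L_0+\det L_1$; then $L\in\mathcal Q$. *)

(* Defs.v *)
From HB Require Import structures.
From mathcomp Require Import all_boot all_order all_algebra all_field.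
From Stdlib Require Import Relations.Relation_Operators.
Set Implicit Arguments. Unset Strict Implicit. Unset Printing Implicit Defensive.
Import Order.TTheory GRing.Theory Num.Theory.

(* Unoriented link diagrams, given as Morse (plat-like) diagrams: a word of *)
(* elementary horizontal slices read from bottom to top.  A slice acts on   *)
(* the current row of endpoints, numbered 0,1,2,... from left to right.     *)
(*   (KCup, i) : creates a minimum whose two ends are new points i, i+1     *)
(*   (KCap, i) : joins points i and i+1 by a maximum                        *)
(*   (KPos, i) : crossing of points i, i+1; the strand going from bottom    *)
(*               position i to top position i+1 is the OVER strand          *)
(*               (braid generator sigma_i)                                  *)
(*   (KNeg, i) : the other crossing (sigma_i^-1)                            *)
Inductive kind := KCup | KCap | KPos | KNeg.
Definition slice := (kind * nat)%type.

Definition kin (k : kind) : nat := if k is KCup then 0 else 2.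
Definition kout (k : kind) : nat := if k is KCap then 0 else 2.

Definition step_width (n : nat) (s : slice) : option nat :=
  if s.2 + kin s.1 <= n then Some (n - kin s.1 + kout s.1) else None.

Fixpoint wfrom (n : nat) (w : seq slice) : option nat :=
  match w with
  | [::] => Some n
  | s :: w' => if step_width n s is Some m then wfrom m w' else None
  end.

Definition closedD (D : seq slice) : bool := wfrom 0 D == Some 0%N.

(* Isotopy: local moves (planar isotopy of Morse diagrams = interchange,    *)
(* zigzag, sliding crossings past extrema; and Reidemeister I, II, III).    *)
Inductive move : seq slice -> seq slice -> Prop :=
| mv_far (k l : kind) (i j : nat) : j + kin l <= i ->
    move [:: (k, i); (l, j)] [:: (l, j); (k, i + kout l - kin l)]
| mv_zig1 i : move [:: (KCup, i); (KCap, i.+1)] [::]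
| mv_zig2 i : move [:: (KCup, i.+1); (KCap, i)] [::]
| mv_R2a i : move [:: (KPos, i); (KNeg, i)] [::]
| mv_R2b i : move [:: (KNeg, i); (KPos, i)] [::]
| mv_R3 i : move [:: (KPos, i); (KPos, i.+1); (KPos, i)]
                 [:: (KPos, i.+1); (KPos, i); (KPos, i.+1)]
| mv_R1cupP i : move [:: (KCup, i); (KPos, i)] [:: (KCup, i)]
| mv_R1cupN i : move [:: (KCup, i); (KNeg, i)] [:: (KCup, i)]
| mv_R1capP i : move [:: (KPos, i); (KCap, i)] [:: (KCap, i)]
| mv_R1capN i : move [:: (KNeg, i); (KCap, i)] [:: (KCap, i)]
| mv_cupP i : move [:: (KCup, i); (KPos, i.+1)] [:: (KCup, i.+1); (KNeg, i)]
| mv_cupN i : move [:: (KCup, i); (KNeg, i.+1)] [:: (KCup, i.+1); (KPos, i)]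
| mv_capP i : move [:: (KPos, i.+1); (KCap, i)] [:: (KNeg, i); (KCap, i.+1)]
| mv_capN i : move [:: (KNeg, i.+1); (KCap, i)] [:: (KPos, i); (KCap, i.+1)].

Definition istep (D1 D2 : seq slice) : Prop :=
  exists u v l r, move l r /\ D1 = u ++ l ++ v /\ D2 = u ++ r ++ v
                  /\ closedD D1 /\ closedD D2.

Definition iso : seq slice -> seq slice -> Prop := clos_refl_sym_trans _ istep.

(* Determinant: |<D>| with the Kauffman bracket evaluated at A = e^{i pi/4} *)
(* (i.e. |V_L(-1)|, the usual determinant), normalised by <O> = 1.          *)
Definition Abr : algC := (4.-root (-1))%R.
Definition delta : algC := (- (Abr ^+ 2) - (Abr ^+ 2)^-1)%R.

Local Open Scope ring_scope.
Fixpoint states (w : seq slice) : seq (algC * seq slice) :=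
  match w with
  | [::] => [:: (1, [::])]
  | s :: w' =>
    let st := states w' in
    match s.1 with
    | KPos => [seq (Abr * p.1, p.2) | p <- st] ++
              [seq (Abr^-1 * p.1, (KCap, s.2) :: (KCup, s.2) :: p.2) | p <- st]
    | KNeg => [seq (Abr^-1 * p.1, p.2) | p <- st] ++
              [seq (Abr * p.1, (KCap, s.2) :: (KCup, s.2) :: p.2) | p <- st]
    | _ => [seq (p.1, s :: p.2) | p <- st]
    end
  end.

Local Close Scope ring_scope.
(* loop counting in a crossingless diagram: m maps each current endpoint to *)
(* the other endpoint of the arc through it                                *)
Definition cupm (i : nat) (m : seq nat) : seq nat :=
  let sh := [seq (if i <= x then x.+2 else x) | x <- m] in
  take i sh ++ [:: i.+1; i] ++ drop i sh.

Definition delm (i : nat) (m : seq nat) : seq nat :=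
  [seq (if i.+1 < x then x - 2 else x) | x <- take i m ++ drop i.+2 m].

Definition capm (i : nat) (m : seq nat) : nat * seq nat :=
  let a := nth 0 m i in let b := nth 0 m i.+1 in
  if a == i.+1 then (1%N, delm i m)
  else (0%N, delm i (set_nth 0 (set_nth 0 m a b) b a)).

Fixpoint loops_aux (w : seq slice) (m : seq nat) : nat :=
  match w with
  | [::] => 0
  | (KCup, i) :: w' => loops_aux w' (cupm i m)
  | (KCap, i) :: w' => let p := capm i m in (p.1 + loops_aux w' p.2)%N
  | _ :: w' => loops_aux w' m
  end.

Definition loops (w : seq slice) : nat := loops_aux w [::].

Local Open Scope ring_scope.
Definition bracket (D : seq slice) : algC :=
  \sum_(p <- states D) p.1 * delta ^+ (loops p.2).-1.

Definition det (D : seq slice) : algC := `|bracket D|.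

Local Close Scope ring_scope.
Definition unknotD : seq slice := [:: (KCup, 0%N); (KCap, 0%N)].

Definition is_crossing (k : kind) : bool :=
  match k with KPos | KNeg => true | _ => false end.

Local Open Scope ring_scope.
Inductive QA : seq slice -> Prop :=
| QA_unknot D : closedD D -> iso D unknotD -> QA D
| QA_skein (D' : seq slice) (u v : seq slice) (k : kind) (i : nat) :
    let D := u ++ (k, i) :: v in
    let D0 := u ++ v in
    let D1 := u ++ [:: (KCap, i); (KCup, i)] ++ v in
    closedD D -> is_crossing k ->
    QA D0 -> QA D1 -> det D0 != 0 -> det D1 != 0 ->
    det D = det D0 + det D1 ->
    iso D' D -> QA D'.

Local Close Scope ring_scope.
(* Closure of a 3-braid: sigma_i = (KPos, i-1), sigma_i^-1 = (KNeg, i-1).   *)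
Definition closure3 (b : seq slice) : seq slice :=
  [:: (KCup, 0%N); (KCup, 1%N); (KCup, 2%N)] ++ b ++
  [:: (KCap, 2%N); (KCap, 1%N); (KCap, 0%N)].

Definition sig1 : slice := (KPos, 0%N).
Definition sig1inv : slice := (KNeg, 0%N).
Definition sig2 : slice := (KPos, 1%N).

Definition Kr (r : nat) : seq slice :=
  closure3 (nseq r sig1inv ++ [:: sig2; sig1; sig1; sig1; sig2]).

(* Main.v *)
Require Import Defs.
From HB Require Import structures.
From mathcomp Require Import all_boot all_order all_algebra all_field.
Import Order.TTheory GRing.Theory Num.Theory.
From Stdlib Require Import Relations.Relation_Operators.
Local Open Scope ring_scope.


Lemma A4 : Abr ^+ 4 = -1.
Proof. by rewrite /Abr rootCK. Qed.

Lemma A_neq0 : Abr != 0.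
Proof.
apply/eqP=> h; have := A4; rewrite h expr0n /= => /eqP.
by rewrite eq_sym oppr_eq0 oner_eq0.
Qed.

Lemma A8 : Abr ^+ 8 = 1.
Proof. by rewrite (_ : 8 = 4 * 2)%N // exprM A4 sqrrN expr1n. Qed.

Lemma Ainv : Abr^-1 = Abr ^+ 7.
Proof.
apply: (mulfI A_neq0); rewrite mulfV ?A_neq0 // -exprS A8 //.
Qed.

Lemma delta0 : delta = 0.
Proof.
rewrite /delta.
have h : (Abr ^+ 2)^-1 = Abr ^+ 6.
  by rewrite -exprVn Ainv -exprM (_ : 7 * 2 = 8 + 6)%N // exprD A8 mul1r.
rewrite h (_ : 6 = 4 + 2)%N // exprD A4 mulN1r opprK addNr //.
Qed.

Lemma normA : `|Abr| = 1.
Proof.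
apply/eqP; rewrite -(pexpr_eq1 (n:=4)) // -normrX A4 normrN normr1 //.
Qed.

Fixpoint statesN (w : seq slice) : seq (nat * seq slice) :=
  match w with
  | [::] => [:: (0%N, [::])]
  | s :: w' =>
    let st := statesN w' in
    match s.1 with
    | KPos => [seq (p.1.+1, p.2) | p <- st] ++
              [seq ((p.1 + 7)%N, (KCap, s.2) :: (KCup, s.2) :: p.2) | p <- st]
    | KNeg => [seq ((p.1 + 7)%N, p.2) | p <- st] ++
              [seq (p.1.+1, (KCap, s.2) :: (KCup, s.2) :: p.2) | p <- st]
    | _ => [seq (p.1, s :: p.2) | p <- st]
    end
  end.

Lemma statesE w : states w = [seq (Abr ^+ p.1, p.2) | p <- statesN w].
Proof.
elim: w => [|[k i] w IH] //=; rewrite IH; case: k => /=; rewrite ?map_cat -?map_comp;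
  try congr (_ ++ _); apply: eq_map => p /=;
  by rewrite ?exprS ?exprD ?Ainv ?(mulrC (Abr ^+ 7)).
Qed.

Definition addc (e : nat) (c : seq int) : seq int :=
  let d : int := if (e %% 8 < 4)%N then 1 else -1 in
  set_nth 0 c (e %% 4) (nth 0 c (e %% 4) + d).
Definition nf (s : seq nat) : seq int := foldr addc [:: 0; 0; 0; 0] s.
Definition evalc (c : seq int) : algC := \sum_(j < 4) (nth 0 c j)%:~R * Abr ^+ j.

Lemma A4k k : Abr ^+ (4 + k) = - Abr ^+ k.
Proof. by rewrite exprD A4 mulN1r. Qed.

Lemma Asign e : Abr ^+ e = (if (e %% 8 < 4)%N then 1 else -1 : int)%:~R * Abr ^+ (e %% 4).
Proof.
have -> : Abr ^+ e = Abr ^+ (e %% 8).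
  by rewrite {1}(divn_eq e 8) exprD mulnC exprM A8 expr1n mul1r.
have -> : (e %% 4 = (e %% 8) %% 4)%N by rewrite modn_dvdm.
have : (e %% 8 < 8)%N by rewrite ltn_pmod.
case: (e %% 8)%N => [|[|[|[|[|[|[|[|//]]]]]]]] _ /=; rewrite ?mul1r //;
  rewrite ?(A4k 0) ?(A4k 1) ?(A4k 2) ?(A4k 3) mulN1r //.
Qed.

Lemma evalc_add e c : evalc (addc e c) = Abr ^+ e + evalc c.
Proof.
rewrite /evalc /addc Asign.
set d : int := (if _ then _ else _).
have hk : (e %% 4 < 4)%N by rewrite ltn_pmod.
rewrite (bigD1 (Ordinal hk)) //= [in RHS](bigD1 (Ordinal hk)) //=.
rewrite nth_set_nth /= eqxx.
rewrite intrD mulrDl -addrA addrCA; congr (_ + (_ + _)).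
apply: eq_bigr => i /eqP hi; rewrite nth_set_nth /=.
case: eqP => // hie; case: hi; apply: val_inj => //.
Qed.

Lemma sum_nf s : \sum_(e <- s) Abr ^+ e = evalc (nf s).
Proof.
elim: s => [|e s IH].
  by rewrite big_nil /evalc big1 // => -[[|[|[|[|//]]]] ?] _; rewrite mul0r.
by rewrite big_cons IH /= evalc_add.
Qed.

Definition expN (D : seq slice) : seq nat :=
  [seq p.1 | p <- statesN D & ((loops p.2).-1 == 0)%N].

Lemma bracket_nf D : bracket D = evalc (nf (expN D)).
Proof.
rewrite /bracket statesE big_map /expN -sum_nf big_map big_filter.
rewrite [RHS]big_mkcond; apply: eq_bigr => p _ /=.
by rewrite delta0 expr0n; case: eqP => _; rewrite ?mulr1 ?mulr0.
Qed.

Lemma evalc_single (n : int) (j : nat) : (j < 4)%N ->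
  evalc (set_nth 0 [:: 0; 0; 0; 0] j n) = n%:~R * Abr ^+ j.
Proof.
move=> hj; rewrite /evalc (bigD1 (Ordinal hj)) //= nth_set_nth /= eqxx big1 ?addr0 //.
move=> i /eqP hi; rewrite nth_set_nth /=.
case: eqP => hie; first by case: hi; apply: val_inj.
by case: i hie hi => [[|[|[|[|//]]]] ?] /= _ _; rewrite mul0r.
Qed.

Lemma det_single D (n : int) (j : nat) : (j < 4)%N ->
  nf (expN D) = set_nth 0 [:: 0; 0; 0; 0] j n -> det D = (absz n)%:R.
Proof.
move=> hj h; rewrite /det bracket_nf h evalc_single // normrM normrX normA expr1n mulr1.
by rewrite natr_absz intr_norm.
Qed.



Lemma step_f D u v l r E : D = u ++ l ++ v -> move l r -> closedD D ->
  closedD (u ++ r ++ v) -> iso (u ++ r ++ v) E -> iso D E.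
Proof.
move=> -> hm h1 h2 h3; apply: rst_trans h3; apply: rst_step.
by exists u, v, l, r.
Qed.

Lemma step_b D u v l r E : D = u ++ r ++ v -> move l r -> closedD D ->
  closedD (u ++ l ++ v) -> iso (u ++ l ++ v) E -> iso D E.
Proof.
move=> -> hm h1 h2 h3; apply: rst_trans h3; apply: rst_sym; apply: rst_step.
by exists u, v, l, r.
Qed.

Lemma iso_refl D : iso D D.
Proof. exact: rst_refl. Qed.

Lemma skein_helper D u v k i D0 D1 (d0 d1 : nat) :
  D = u ++ (k, i) :: v -> D0 = u ++ v -> D1 = u ++ [:: (KCap, i); (KCup, i)] ++ v ->
  closedD D -> is_crossing k -> QA D0 -> QA D1 ->
  det D0 = d0%:R -> det D1 = d1%:R -> det D = (d0 + d1)%:R ->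
  (0 < d0)%N -> (0 < d1)%N -> QA D.
Proof.
move=> hD h0 h1 hc hk q0 q1 e0 e1 e hd0 hd1.
apply: (@QA_skein D u v k i) => //; rewrite -?h0 -?h1 -?hD //.
- by rewrite e0 pnatr_eq0 -lt0n.
- by rewrite e1 pnatr_eq0 -lt0n.
- by rewrite e e0 e1 natrD.
- rewrite hD; exact: iso_refl.
Qed.

Lemma qa_4 : QA [:: (KCup, 0%N); (KCup, 1%N); (KCup, 2%N); (KPos, 0%N); (KPos, 1%N); (KCap, 2%N); (KCap, 1%N); (KCap, 0%N)].
Proof.
apply: QA_unknot => //.
apply: (@step_b _ [:: (KCup, 0%N); (KCup, 1%N); (KCup, 2%N); (KPos, 0%N)] [:: (KCap, 1%N); (KCap, 0%N)] _ _ _ _ (mv_capN 1)) => //.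
apply: (@step_b _ [:: (KCup, 0%N); (KCup, 1%N); (KCup, 2%N)] [:: (KCap, 1%N); (KCap, 1%N); (KCap, 0%N)] _ _ _ _ (@mv_far KNeg KPos 2 0 erefl)) => //.
apply: (@step_f _ [:: (KCup, 0%N); (KCup, 1%N)] [:: (KPos, 0%N); (KCap, 1%N); (KCap, 1%N); (KCap, 0%N)] _ _ _ _ (mv_R1cupN 2)) => //.
apply: (@step_f _ [:: (KCup, 0%N); (KCup, 1%N)] [:: (KCap, 1%N); (KCap, 1%N); (KCap, 0%N)] _ _ _ _ (@mv_far KCup KPos 2 0 erefl)) => //.
apply: (@step_f _ [:: (KCup, 0%N); (KCup, 1%N); (KPos, 0%N)] [:: (KCap, 1%N); (KCap, 0%N)] _ _ _ _ (mv_zig2 1)) => //.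
apply: (@step_b _ [:: (KCup, 0%N)] [:: (KCap, 1%N); (KCap, 0%N)] _ _ _ _ (mv_cupN 0)) => //.
apply: (@step_f _ [:: (KCup, 0%N); (KCup, 0%N)] [:: (KCap, 0%N)] _ _ _ _ (mv_R1capN 1)) => //.
apply: (@step_f _ [:: (KCup, 0%N)] [:: (KCap, 0%N)] _ _ _ _ (mv_zig1 0)) => //.
exact: iso_refl.
Qed.

Lemma qa_5 : QA [:: (KCup, 0%N); (KCup, 1%N); (KCup, 2%N); (KCap, 0%N); (KCup, 0%N); (KPos, 0%N); (KPos, 1%N); (KCap, 2%N); (KCap, 1%N); (KCap, 0%N)].
Proof.
apply: QA_unknot => //.
apply: (@step_f _ [:: (KCup, 0%N); (KCup, 1%N); (KCup, 2%N); (KCap, 0%N)] [:: (KPos, 1%N); (KCap, 2%N); (KCap, 1%N); (KCap, 0%N)] _ _ _ _ (mv_R1cupP 0)) => //.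
apply: (@step_f _ [:: (KCup, 0%N); (KCup, 1%N)] [:: (KCup, 0%N); (KPos, 1%N); (KCap, 2%N); (KCap, 1%N); (KCap, 0%N)] _ _ _ _ (@mv_far KCup KCap 2 0 erefl)) => //.
apply: (@step_f _ [:: (KCup, 0%N)] [:: (KCup, 0%N); (KCup, 0%N); (KPos, 1%N); (KCap, 2%N); (KCap, 1%N); (KCap, 0%N)] _ _ _ _ (mv_zig2 0)) => //.
apply: (@step_b _ [:: (KCup, 0%N); (KCup, 0%N); (KCup, 0%N)] [:: (KCap, 1%N); (KCap, 0%N)] _ _ _ _ (mv_capN 1)) => //.
apply: (@step_f _ [:: (KCup, 0%N)] [:: (KNeg, 2%N); (KCap, 1%N); (KCap, 1%N); (KCap, 0%N)] _ _ _ _ (@mv_far KCup KCup 0 0 erefl)) => //.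
apply: (@step_f _ [:: (KCup, 0%N); (KCup, 0%N)] [:: (KCap, 1%N); (KCap, 1%N); (KCap, 0%N)] _ _ _ _ (mv_R1cupN 2)) => //.
apply: (@step_f _ [:: (KCup, 0%N); (KCup, 0%N)] [:: (KCap, 1%N); (KCap, 0%N)] _ _ _ _ (mv_zig2 1)) => //.
apply: (@step_f _ [:: (KCup, 0%N)] [:: (KCap, 0%N)] _ _ _ _ (mv_zig1 0)) => //.
exact: iso_refl.
Qed.

Lemma qa_3 : QA [:: (KCup, 0%N); (KCup, 1%N); (KCup, 2%N); (KPos, 0%N); (KPos, 0%N); (KPos, 1%N); (KCap, 2%N); (KCap, 1%N); (KCap, 0%N)].
Proof.
apply: (@skein_helper _ [:: (KCup, 0%N); (KCup, 1%N); (KCup, 2%N)] [:: (KPos, 0%N); (KPos, 1%N); (KCap, 2%N); (KCap, 1%N); (KCap, 0%N)] KPos 0 [:: (KCup, 0%N); (KCup, 1%N); (KCup, 2%N); (KPos, 0%N); (KPos, 1%N); (KCap, 2%N); (KCap, 1%N); (KCap, 0%N)] [:: (KCup, 0%N); (KCup, 1%N); (KCup, 2%N); (KCap, 0%N); (KCup, 0%N); (KPos, 0%N); (KPos, 1%N); (KCap, 2%N); (KCap, 1%N); (KCap, 0%N)] 1 1) => //.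
- exact: qa_4.
- exact: qa_5.
- apply: (@det_single _ (-1) 2) => //; vm_compute; reflexivity.
- apply: (@det_single _ (1) 0) => //; vm_compute; reflexivity.
- apply: (@det_single _ (-2) 3) => //; vm_compute; reflexivity.
Qed.

Lemma qa_6 : QA [:: (KCup, 0%N); (KCup, 1%N); (KCup, 2%N); (KCap, 0%N); (KCup, 0%N); (KPos, 0%N); (KPos, 0%N); (KPos, 1%N); (KCap, 2%N); (KCap, 1%N); (KCap, 0%N)].
Proof.
apply: QA_unknot => //.
apply: (@step_f _ [:: (KCup, 0%N); (KCup, 1%N); (KCup, 2%N); (KCap, 0%N)] [:: (KPos, 0%N); (KPos, 1%N); (KCap, 2%N); (KCap, 1%N); (KCap, 0%N)] _ _ _ _ (mv_R1cupP 0)) => //.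
apply: (@step_f _ [:: (KCup, 0%N); (KCup, 1%N); (KCup, 2%N); (KCap, 0%N)] [:: (KPos, 1%N); (KCap, 2%N); (KCap, 1%N); (KCap, 0%N)] _ _ _ _ (mv_R1cupP 0)) => //.
apply: (@step_f _ [:: (KCup, 0%N); (KCup, 1%N)] [:: (KCup, 0%N); (KPos, 1%N); (KCap, 2%N); (KCap, 1%N); (KCap, 0%N)] _ _ _ _ (@mv_far KCup KCap 2 0 erefl)) => //.
apply: (@step_f _ [:: (KCup, 0%N)] [:: (KCup, 0%N); (KCup, 0%N); (KPos, 1%N); (KCap, 2%N); (KCap, 1%N); (KCap, 0%N)] _ _ _ _ (mv_zig2 0)) => //.
apply: (@step_b _ [:: (KCup, 0%N); (KCup, 0%N); (KCup, 0%N)] [:: (KCap, 1%N); (KCap, 0%N)] _ _ _ _ (mv_capN 1)) => //.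
apply: (@step_f _ [:: (KCup, 0%N)] [:: (KNeg, 2%N); (KCap, 1%N); (KCap, 1%N); (KCap, 0%N)] _ _ _ _ (@mv_far KCup KCup 0 0 erefl)) => //.
apply: (@step_f _ [:: (KCup, 0%N); (KCup, 0%N)] [:: (KCap, 1%N); (KCap, 1%N); (KCap, 0%N)] _ _ _ _ (mv_R1cupN 2)) => //.
apply: (@step_f _ [:: (KCup, 0%N); (KCup, 0%N)] [:: (KCap, 1%N); (KCap, 0%N)] _ _ _ _ (mv_zig2 1)) => //.
apply: (@step_f _ [:: (KCup, 0%N)] [:: (KCap, 0%N)] _ _ _ _ (mv_zig1 0)) => //.
exact: iso_refl.
Qed.

Lemma qa_2 : QA [:: (KCup, 0%N); (KCup, 1%N); (KCup, 2%N); (KPos, 0%N); (KPos, 0%N); (KPos, 0%N); (KPos, 1%N); (KCap, 2%N); (KCap, 1%N); (KCap, 0%N)].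
Proof.
apply: (@skein_helper _ [:: (KCup, 0%N); (KCup, 1%N); (KCup, 2%N)] [:: (KPos, 0%N); (KPos, 0%N); (KPos, 1%N); (KCap, 2%N); (KCap, 1%N); (KCap, 0%N)] KPos 0 [:: (KCup, 0%N); (KCup, 1%N); (KCup, 2%N); (KPos, 0%N); (KPos, 0%N); (KPos, 1%N); (KCap, 2%N); (KCap, 1%N); (KCap, 0%N)] [:: (KCup, 0%N); (KCup, 1%N); (KCup, 2%N); (KCap, 0%N); (KCup, 0%N); (KPos, 0%N); (KPos, 0%N); (KPos, 1%N); (KCap, 2%N); (KCap, 1%N); (KCap, 0%N)] 2 1) => //.
- exact: qa_3.
- exact: qa_6.
- apply: (@det_single _ (-2) 3) => //; vm_compute; reflexivity.
- apply: (@det_single _ (1) 1) => //; vm_compute; reflexivity.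
- apply: (@det_single _ (3) 0) => //; vm_compute; reflexivity.
Qed.

Lemma qa_9 : QA [:: (KCup, 0%N); (KCup, 1%N); (KCup, 2%N); (KCap, 1%N); (KCup, 1%N); (KPos, 0%N); (KPos, 1%N); (KCap, 2%N); (KCap, 1%N); (KCap, 0%N)].
Proof.
apply: QA_unknot => //.
apply: (@step_f _ [:: (KCup, 0%N); (KCup, 1%N)] [:: (KCup, 1%N); (KPos, 0%N); (KPos, 1%N); (KCap, 2%N); (KCap, 1%N); (KCap, 0%N)] _ _ _ _ (mv_zig2 1)) => //.
apply: (@step_b _ [:: (KCup, 0%N); (KCup, 1%N)] [:: (KPos, 1%N); (KCap, 2%N); (KCap, 1%N); (KCap, 0%N)] _ _ _ _ (mv_cupN 0)) => //.
apply: (@step_f _ [:: (KCup, 0%N); (KCup, 1%N); (KCup, 0%N)] [:: (KCap, 2%N); (KCap, 1%N); (KCap, 0%N)] _ _ _ _ (mv_R2b 1)) => //.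
apply: (@step_f _ [:: (KCup, 0%N)] [:: (KCap, 2%N); (KCap, 1%N); (KCap, 0%N)] _ _ _ _ (@mv_far KCup KCup 1 0 erefl)) => //.
apply: (@step_f _ [:: (KCup, 0%N); (KCup, 0%N)] [:: (KCap, 1%N); (KCap, 0%N)] _ _ _ _ (mv_zig2 2)) => //.
apply: (@step_f _ [:: (KCup, 0%N)] [:: (KCap, 0%N)] _ _ _ _ (mv_zig1 0)) => //.
exact: iso_refl.
Qed.

Lemma qa_10 : QA [:: (KCup, 0%N); (KCup, 1%N); (KCup, 2%N); (KCap, 1%N); (KCup, 1%N); (KCap, 0%N); (KCup, 0%N); (KPos, 0%N); (KPos, 1%N); (KCap, 2%N); (KCap, 1%N); (KCap, 0%N)].
Proof.
apply: QA_unknot => //.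
apply: (@step_f _ [:: (KCup, 0%N); (KCup, 1%N); (KCup, 2%N); (KCap, 1%N); (KCup, 1%N); (KCap, 0%N)] [:: (KPos, 1%N); (KCap, 2%N); (KCap, 1%N); (KCap, 0%N)] _ _ _ _ (mv_R1cupP 0)) => //.
apply: (@step_f _ [:: (KCup, 0%N); (KCup, 1%N)] [:: (KCup, 1%N); (KCap, 0%N); (KCup, 0%N); (KPos, 1%N); (KCap, 2%N); (KCap, 1%N); (KCap, 0%N)] _ _ _ _ (mv_zig2 1)) => //.
apply: (@step_f _ [:: (KCup, 0%N); (KCup, 1%N)] [:: (KCup, 0%N); (KPos, 1%N); (KCap, 2%N); (KCap, 1%N); (KCap, 0%N)] _ _ _ _ (mv_zig2 0)) => //.
apply: (@step_f _ [:: (KCup, 0%N)] [:: (KPos, 1%N); (KCap, 2%N); (KCap, 1%N); (KCap, 0%N)] _ _ _ _ (@mv_far KCup KCup 1 0 erefl)) => //.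
apply: (@step_f _ [:: (KCup, 0%N); (KCup, 0%N)] [:: (KCap, 2%N); (KCap, 1%N); (KCap, 0%N)] _ _ _ _ (@mv_far KCup KPos 3 1 erefl)) => //.
apply: (@step_f _ [:: (KCup, 0%N); (KCup, 0%N); (KPos, 1%N)] [:: (KCap, 1%N); (KCap, 0%N)] _ _ _ _ (mv_zig2 2)) => //.
apply: (@step_f _ [:: (KCup, 0%N); (KCup, 0%N)] [:: (KCap, 0%N)] _ _ _ _ (mv_R1capP 1)) => //.
apply: (@step_f _ [:: (KCup, 0%N)] [:: (KCap, 0%N)] _ _ _ _ (mv_zig1 0)) => //.
exact: iso_refl.
Qed.

Lemma qa_8 : QA [:: (KCup, 0%N); (KCup, 1%N); (KCup, 2%N); (KCap, 1%N); (KCup, 1%N); (KPos, 0%N); (KPos, 0%N); (KPos, 1%N); (KCap, 2%N); (KCap, 1%N); (KCap, 0%N)].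
Proof.
apply: (@skein_helper _ [:: (KCup, 0%N); (KCup, 1%N); (KCup, 2%N); (KCap, 1%N); (KCup, 1%N)] [:: (KPos, 0%N); (KPos, 1%N); (KCap, 2%N); (KCap, 1%N); (KCap, 0%N)] KPos 0 [:: (KCup, 0%N); (KCup, 1%N); (KCup, 2%N); (KCap, 1%N); (KCup, 1%N); (KPos, 0%N); (KPos, 1%N); (KCap, 2%N); (KCap, 1%N); (KCap, 0%N)] [:: (KCup, 0%N); (KCup, 1%N); (KCup, 2%N); (KCap, 1%N); (KCup, 1%N); (KCap, 0%N); (KCup, 0%N); (KPos, 0%N); (KPos, 1%N); (KCap, 2%N); (KCap, 1%N); (KCap, 0%N)] 1 1) => //.
- exact: qa_9.
- exact: qa_10.
- apply: (@det_single _ (1) 0) => //; vm_compute; reflexivity.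
- apply: (@det_single _ (1) 2) => //; vm_compute; reflexivity.
- apply: (@det_single _ (2) 1) => //; vm_compute; reflexivity.
Qed.

Lemma qa_11 : QA [:: (KCup, 0%N); (KCup, 1%N); (KCup, 2%N); (KCap, 1%N); (KCup, 1%N); (KCap, 0%N); (KCup, 0%N); (KPos, 0%N); (KPos, 0%N); (KPos, 1%N); (KCap, 2%N); (KCap, 1%N); (KCap, 0%N)].
Proof.
apply: QA_unknot => //.
apply: (@step_f _ [:: (KCup, 0%N); (KCup, 1%N); (KCup, 2%N); (KCap, 1%N); (KCup, 1%N); (KCap, 0%N)] [:: (KPos, 0%N); (KPos, 1%N); (KCap, 2%N); (KCap, 1%N); (KCap, 0%N)] _ _ _ _ (mv_R1cupP 0)) => //.
apply: (@step_f _ [:: (KCup, 0%N); (KCup, 1%N); (KCup, 2%N); (KCap, 1%N); (KCup, 1%N); (KCap, 0%N)] [:: (KPos, 1%N); (KCap, 2%N); (KCap, 1%N); (KCap, 0%N)] _ _ _ _ (mv_R1cupP 0)) => //.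
apply: (@step_f _ [:: (KCup, 0%N); (KCup, 1%N)] [:: (KCup, 1%N); (KCap, 0%N); (KCup, 0%N); (KPos, 1%N); (KCap, 2%N); (KCap, 1%N); (KCap, 0%N)] _ _ _ _ (mv_zig2 1)) => //.
apply: (@step_f _ [:: (KCup, 0%N); (KCup, 1%N)] [:: (KCup, 0%N); (KPos, 1%N); (KCap, 2%N); (KCap, 1%N); (KCap, 0%N)] _ _ _ _ (mv_zig2 0)) => //.
apply: (@step_f _ [:: (KCup, 0%N)] [:: (KPos, 1%N); (KCap, 2%N); (KCap, 1%N); (KCap, 0%N)] _ _ _ _ (@mv_far KCup KCup 1 0 erefl)) => //.
apply: (@step_f _ [:: (KCup, 0%N); (KCup, 0%N)] [:: (KCap, 2%N); (KCap, 1%N); (KCap, 0%N)] _ _ _ _ (@mv_far KCup KPos 3 1 erefl)) => //.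
apply: (@step_f _ [:: (KCup, 0%N); (KCup, 0%N); (KPos, 1%N)] [:: (KCap, 1%N); (KCap, 0%N)] _ _ _ _ (mv_zig2 2)) => //.
apply: (@step_f _ [:: (KCup, 0%N); (KCup, 0%N)] [:: (KCap, 0%N)] _ _ _ _ (mv_R1capP 1)) => //.
apply: (@step_f _ [:: (KCup, 0%N)] [:: (KCap, 0%N)] _ _ _ _ (mv_zig1 0)) => //.
exact: iso_refl.
Qed.

Lemma qa_7 : QA [:: (KCup, 0%N); (KCup, 1%N); (KCup, 2%N); (KCap, 1%N); (KCup, 1%N); (KPos, 0%N); (KPos, 0%N); (KPos, 0%N); (KPos, 1%N); (KCap, 2%N); (KCap, 1%N); (KCap, 0%N)].
Proof.
apply: (@skein_helper _ [:: (KCup, 0%N); (KCup, 1%N); (KCup, 2%N); (KCap, 1%N); (KCup, 1%N)] [:: (KPos, 0%N); (KPos, 0%N); (KPos, 1%N); (KCap, 2%N); (KCap, 1%N); (KCap, 0%N)] KPos 0 [:: (KCup, 0%N); (KCup, 1%N); (KCup, 2%N); (KCap, 1%N); (KCup, 1%N); (KPos, 0%N); (KPos, 0%N); (KPos, 1%N); (KCap, 2%N); (KCap, 1%N); (KCap, 0%N)] [:: (KCup, 0%N); (KCup, 1%N); (KCup, 2%N); (KCap, 1%N); (KCup, 1%N); (KCap, 0%N); (KCup, 0%N); (KPos, 0%N); (KPos, 0%N); (KPos, 1%N); (KCap, 2%N); (KCap, 1%N); (KCap, 0%N)] 2 1) => //.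
- exact: qa_8.
- exact: qa_11.
- apply: (@det_single _ (2) 1) => //; vm_compute; reflexivity.
- apply: (@det_single _ (1) 3) => //; vm_compute; reflexivity.
- apply: (@det_single _ (3) 2) => //; vm_compute; reflexivity.
Qed.

Lemma qa_1 : QA [:: (KCup, 0%N); (KCup, 1%N); (KCup, 2%N); (KPos, 1%N); (KPos, 0%N); (KPos, 0%N); (KPos, 0%N); (KPos, 1%N); (KCap, 2%N); (KCap, 1%N); (KCap, 0%N)].
Proof.
apply: (@skein_helper _ [:: (KCup, 0%N); (KCup, 1%N); (KCup, 2%N)] [:: (KPos, 0%N); (KPos, 0%N); (KPos, 0%N); (KPos, 1%N); (KCap, 2%N); (KCap, 1%N); (KCap, 0%N)] KPos 1 [:: (KCup, 0%N); (KCup, 1%N); (KCup, 2%N); (KPos, 0%N); (KPos, 0%N); (KPos, 0%N); (KPos, 1%N); (KCap, 2%N); (KCap, 1%N); (KCap, 0%N)] [:: (KCup, 0%N); (KCup, 1%N); (KCup, 2%N); (KCap, 1%N); (KCup, 1%N); (KPos, 0%N); (KPos, 0%N); (KPos, 0%N); (KPos, 1%N); (KCap, 2%N); (KCap, 1%N); (KCap, 0%N)] 3 3) => //.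
- exact: qa_2.
- exact: qa_7.
- apply: (@det_single _ (3) 0) => //; vm_compute; reflexivity.
- apply: (@det_single _ (3) 2) => //; vm_compute; reflexivity.
- apply: (@det_single _ (6) 1) => //; vm_compute; reflexivity.
Qed.

Lemma iso_D10 : iso [:: (KCup, 0%N); (KCup, 1%N); (KCup, 2%N); (KCap, 0%N); (KCup, 0%N); (KPos, 1%N); (KPos, 0%N); (KPos, 0%N); (KPos, 0%N); (KPos, 1%N); (KCap, 2%N); (KCap, 1%N); (KCap, 0%N)] unknotD.
Proof.
apply: (@step_f _ [:: (KCup, 0%N); (KCup, 1%N)] [:: (KCup, 0%N); (KPos, 1%N); (KPos, 0%N); (KPos, 0%N); (KPos, 0%N); (KPos, 1%N); (KCap, 2%N); (KCap, 1%N); (KCap, 0%N)] _ _ _ _ (@mv_far KCup KCap 2 0 erefl)) => //.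
apply: (@step_f _ [:: (KCup, 0%N)] [:: (KCup, 0%N); (KCup, 0%N); (KPos, 1%N); (KPos, 0%N); (KPos, 0%N); (KPos, 0%N); (KPos, 1%N); (KCap, 2%N); (KCap, 1%N); (KCap, 0%N)] _ _ _ _ (mv_zig2 0)) => //.
apply: (@step_f _ [:: (KCup, 0%N); (KCup, 0%N)] [:: (KPos, 0%N); (KPos, 0%N); (KPos, 0%N); (KPos, 1%N); (KCap, 2%N); (KCap, 1%N); (KCap, 0%N)] _ _ _ _ (mv_cupP 0)) => //.
apply: (@step_f _ [:: (KCup, 0%N); (KCup, 0%N); (KCup, 1%N)] [:: (KPos, 0%N); (KPos, 0%N); (KPos, 1%N); (KCap, 2%N); (KCap, 1%N); (KCap, 0%N)] _ _ _ _ (mv_R2b 0)) => //.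
apply: (@step_b _ [:: (KCup, 0%N); (KCup, 0%N)] [:: (KPos, 0%N); (KPos, 1%N); (KCap, 2%N); (KCap, 1%N); (KCap, 0%N)] _ _ _ _ (mv_cupN 0)) => //.
apply: (@step_b _ [:: (KCup, 0%N); (KCup, 0%N); (KCup, 0%N); (KNeg, 1%N); (KPos, 0%N)] [:: (KCap, 1%N); (KCap, 0%N)] _ _ _ _ (mv_capN 1)) => //.
apply: (@step_b _ [:: (KCup, 0%N); (KCup, 0%N); (KCup, 0%N); (KNeg, 1%N)] [:: (KCap, 1%N); (KCap, 1%N); (KCap, 0%N)] _ _ _ _ (@mv_far KNeg KPos 2 0 erefl)) => //.
apply: (@step_f _ [:: (KCup, 0%N)] [:: (KNeg, 1%N); (KNeg, 2%N); (KPos, 0%N); (KCap, 1%N); (KCap, 1%N); (KCap, 0%N)] _ _ _ _ (@mv_far KCup KCup 0 0 erefl)) => //.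
apply: (@step_b _ [:: (KCup, 0%N); (KCup, 0%N)] [:: (KNeg, 2%N); (KPos, 0%N); (KCap, 1%N); (KCap, 1%N); (KCap, 0%N)] _ _ _ _ (mv_cupP 1)) => //.
apply: (@step_f _ [:: (KCup, 0%N); (KCup, 0%N); (KCup, 1%N)] [:: (KPos, 0%N); (KCap, 1%N); (KCap, 1%N); (KCap, 0%N)] _ _ _ _ (mv_R2a 2)) => //.
apply: (@step_b _ [:: (KCup, 0%N); (KCup, 0%N)] [:: (KCap, 1%N); (KCap, 1%N); (KCap, 0%N)] _ _ _ _ (mv_cupN 0)) => //.
apply: (@step_f _ [:: (KCup, 0%N); (KCup, 0%N); (KCup, 0%N)] [:: (KCap, 1%N); (KCap, 0%N)] _ _ _ _ (mv_R1capN 1)) => //.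
apply: (@step_f _ [:: (KCup, 0%N); (KCup, 0%N)] [:: (KCap, 1%N); (KCap, 0%N)] _ _ _ _ (mv_zig1 0)) => //.
apply: (@step_f _ [:: (KCup, 0%N)] [:: (KCap, 0%N)] _ _ _ _ (mv_zig1 0)) => //.
exact: iso_refl.
Qed.

Lemma qa_Kr0 : QA [:: (KCup, 0%N); (KCup, 1%N); (KCup, 2%N); (KPos, 1%N); (KPos, 0%N); (KPos, 0%N); (KPos, 0%N); (KPos, 1%N); (KCap, 2%N); (KCap, 1%N); (KCap, 0%N)].
Proof. exact: qa_1. Qed.



Definition u3 : seq slice := [:: (KCup, 0%N); (KCup, 1%N); (KCup, 2%N)].
Definition tl : seq slice := [:: sig2; sig1; sig1; sig1; sig2; (KCap, 2%N); (KCap, 1%N); (KCap, 0%N)].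
Definition T r := nseq r sig1inv ++ tl.
Definition cc : seq slice := [:: (KCap, 0%N); (KCup, 0%N)].
Definition D1 r := u3 ++ cc ++ T r.

Lemma Kr_eq r : Kr r = u3 ++ T r.
Proof. by rewrite /Kr /closure3 -catA. Qed.

Definition noncross (s : slice) : bool := ~~ is_crossing s.1.

Lemma states_pre u w : all noncross u ->
  states (u ++ w) = [seq (p.1, u ++ p.2) | p <- states w].
Proof.
elim: u => [|[k i] u IH] /=; first by move=> _; elim: (states w) => //= -[a b] s <-.
case/andP; case: k => //= _ h; rewrite IH // -map_comp; exact: eq_map.
Qed.

Lemma bracket_pre u w : all noncross u ->
  bracket (u ++ w) = \sum_(p <- states w) p.1 * delta ^+ (loops (u ++ p.2)).-1.
Proof. by move=> h; rewrite /bracket states_pre // big_map. Qed.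

Fixpoint ccs k (w : seq slice) := if k is k'.+1 then (KCap, 0%N) :: (KCup, 0%N) :: ccs k' w else w.

Lemma ccs_cc k w : ccs k ((KCap, 0%N) :: (KCup, 0%N) :: w) = ccs k.+1 w.
Proof. by elim: k => //= k ->. Qed.

Lemma loops_cupcap m w : loops_aux ((KCup, 0%N) :: (KCap, 0%N) :: w) m = (1 + loops_aux w m)%N.
Proof.
rewrite /= /capm /cupm /= /delm /= ?take0 ?drop0 /=.
congr (_ + loops_aux w _)%N.
rewrite drop0 -map_comp -[RHS]map_id; apply: eq_map => x /=.
by rewrite subn2.
Qed.

Lemma loops_aux_cc k m w : loops_aux ((KCup, 0%N) :: ccs k w) m = (k + loops_aux ((KCup, 0%N) :: w) m)%N.
Proof.
elim: k => // k IH.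
have -> : ccs k.+1 w = (KCap,0%N)::(KCup,0%N)::ccs k w by [].
by rewrite loops_cupcap IH addnA add1n.
Qed.

Lemma loops_pre w : loops (u3 ++ (KCap, 0%N) :: w) = loops_aux w [:: 1%N; 0%N; 3%N; 2%N].
Proof. reflexivity. Qed.

Lemma loops_ccs k w : loops (u3 ++ cc ++ ccs k w) = (k + loops (u3 ++ cc ++ w))%N.
Proof. by rewrite /cc /= !loops_pre loops_aux_cc. Qed.

Lemma tl_loops : all (fun p => (0 < loops (u3 ++ cc ++ p.2))%N) (statesN tl).
Proof. by vm_compute. Qed.

Lemma bracket_D1 r : bracket (D1 r) =
  \sum_(p <- states (T r)) p.1 * delta ^+ (loops (u3 ++ cc ++ p.2)).-1.
Proof.
rewrite /D1 catA bracket_pre //; apply: eq_bigr => p _; by rewrite catA.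
Qed.

Lemma states_neg w i : states ((KNeg, i) :: w) =
  [seq (Abr^-1 * p.1, p.2) | p <- states w] ++
  [seq (Abr * p.1, (KCap, i) :: (KCup, i) :: p.2) | p <- states w].
Proof. by []. Qed.

Lemma S_ind r : forall k,
  \sum_(p <- states (T r)) p.1 * delta ^+ (loops (u3 ++ cc ++ ccs k p.2)).-1 =
  if k == 0%N then Abr^-1 ^+ r * bracket (D1 0) else 0.
Proof.
elim: r => [|r IH] k.
  case: k => [|k].
    by rewrite eqxx expr0 mul1r bracket_D1.
  rewrite [RHS]/= statesE big_map.
  move: tl_loops; rewrite (_ : T 0 = tl) //.
  elim: (statesN tl) => [|p s IHs]; first by rewrite big_nil.
  case/andP => h hs; rewrite big_cons IHs // addr0 loops_ccs delta0 expr0n.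
  by rewrite addSn /= addn_eq0 (gtn_eqF h) andbF mulr0.
rewrite (_ : T r.+1 = (KNeg, 0%N) :: T r) // states_neg big_cat !big_map. 
under eq_bigr do rewrite -mulrA.
under [X in _ + X = _]eq_bigr do rewrite ccs_cc -mulrA.
rewrite -!big_distrr IH IH.
case: k => [|k] /=; last by rewrite !mulr0 addr0.
by rewrite mulr0 addr0 exprS mulrA.
Qed.

Lemma bD1 r : bracket (D1 r) = Abr^-1 ^+ r * bracket (D1 0).
Proof. by rewrite bracket_D1 (S_ind r 0). Qed.

Lemma bKr_step r : bracket (Kr r.+1) = Abr^-1 * bracket (Kr r) + Abr * bracket (D1 r).
Proof.
rewrite !Kr_eq bracket_D1 !bracket_pre // (_ : T r.+1 = (KNeg, 0%N) :: T r) //.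
rewrite states_neg big_cat !big_map /= !big_distrr /=.
by congr (_ + _); apply: eq_bigr => p _; rewrite mulrA.
Qed.

Lemma bD10 : bracket (D1 0) = (-1)%:~R * Abr ^+ 3.
Proof.
rewrite bracket_nf -(@evalc_single _ 3) //; congr evalc; by vm_compute.
Qed.

Lemma bKr0 : bracket (Kr 0) = (6%:Z)%:~R * Abr ^+ 1.
Proof.
rewrite bracket_nf -(@evalc_single _ 1) //; congr evalc; by vm_compute.
Qed.

Definition bb := Abr ^+ 2 * bracket (D1 0).

Lemma bKr r : bracket (Kr r) = (r + 6)%:R * bb * Abr^-1 ^+ r.
Proof.
elim: r => [|r IH].
  rewrite bKr0 /bb bD10 expr0 mulr1 add0n.
  have -> : Abr ^+ 2 * ((-1)%:~R * Abr ^+ 3) = Abr ^+ 1.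
    by rewrite mulrCA -exprD (A4k 1) mulN1r opprK.
  by [].
rewrite bKr_step IH bD1 /bb.
have hA : Abr^-1 * Abr ^+ 2 = Abr.
  by rewrite expr2 mulrA mulVf ?A_neq0 // mul1r.
set X := Abr ^+ 2 * bracket (D1 0).
set Y := Abr^-1 ^+ r.
have e2 : Abr * (Y * bracket (D1 0)) = Abr^-1 * (X * Y).
  rewrite /X !mulrA.
  by rewrite mulVf ?A_neq0 // mul1r -!mulrA [Y * _]mulrC.
rewrite e2 exprS -/Y.
have -> : (r.+1 + 6)%:R = (r + 6)%:R + 1 :> algC by rewrite addSn -addn1 natrD.
rewrite !mulrDl mul1r; congr (_ + _); by rewrite mulrCA.
Qed.

Lemma normbD10 : `|bracket (D1 0)| = 1.
Proof.
rewrite bD10 normrM normrX normA expr1n mulr1 -intr_norm //.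
Qed.

Lemma normbb : `|bb| = 1.
Proof. by rewrite /bb normrM normrX normA expr1n mul1r normbD10. Qed.

Lemma detKr r : det (Kr r) = (r + 6)%:R.
Proof.
by rewrite /det bKr normrM normrM normbb normr_nat normrX normfV normA invr1 expr1n !mulr1.
Qed.

Lemma detD1 r : det (D1 r) = 1%:R.
Proof.
by rewrite /det bD1 normrM normbD10 normrX normfV normA invr1 expr1n !mulr1.
Qed.

Lemma wfrom_nseq n r w : (2 <= n)%N -> wfrom n (nseq r sig1inv ++ w) = wfrom n w.
Proof.
move=> h; elim: r => //= r IH.
by rewrite /step_width /= h subnK.
Qed.

Lemma closed_Kr r : closedD (Kr r).
Proof. by rewrite /closedD Kr_eq /= /T wfrom_nseq. Qed.

Lemma closed_D1 r : closedD (D1 r).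
Proof. by rewrite /closedD /D1 /= /T wfrom_nseq. Qed.

Lemma iso_D1 r : iso (D1 r) unknotD.
Proof.
elim: r => [|r IH]; first exact: iso_D10.
apply: (@step_f _ (u3 ++ [:: (KCap, 0%N)]) (T r) _ _ _ _ (mv_R1cupN 0)) => //.
- exact: closed_D1.
- exact: closed_D1.
Qed.

Theorem mainTheorem4 (r : nat) :
  QA (Kr r) /\ det (Kr r) = (r + 6)%:R.
Proof.
split; last exact: detKr.
elim: r => [|r IH]; first exact: qa_Kr0.
apply: (@skein_helper _ u3 (T r) KNeg 0 (Kr r) (D1 r) (r + 6) 1) => //.
- by rewrite Kr_eq.
- by rewrite Kr_eq.
- exact: closed_Kr.
- apply: QA_unknot; [exact: closed_D1 | exact: iso_D1].
- exact: detKr.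
- exact: detD1.
- by rewrite detKr addn1 addSn.
- by rewrite addnS.
Qed.
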